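(* Let $T^{2,2}$ and $T^{2,3}$ be the policies with $T^{2,2}_i=\mathcal{R}_{2,2}(T_i^* )$ and $T^{2,3}_i=\mathcal{R}_{2,3}(T_i^* )$ for every $i\in[n]$. Both are resource-feasible and $\min\{F(T^{2,2}),F(T^{2,3})\}\le 1.3776\cdot\mathrm{OPT}(P)$.
   Context: An instance consists of integers $n\ge 1$, $D\ge 1$; a joint ordering cost $K_0>0$; for each commodity $i\in[n]$ an ordering cost $K_i>0$ and a holding coefficient $H_i>0$; and resource coefficients $\alpha_{id}\ge 0$. A policy is $T=(T_1,\dots,T_n)\in\mathbb{R}_{>0}^n$; it is resource-feasible if $\sum_{i}\alpha_{id}/T_i\le 1$ for every $d\in[D]$. For $g>0$, $\Delta\ge 0$, $\mathcal{M}_{g,\Delta}=\{0,g,\dots,\lfloor\Delta/g\rfloor g\}$; $N(T,\Delta)=|\bigcup_{i}\mathcal{M}_{T_i,\Delta}|$; $J(T)=K_0\limsup_{\Delta\to\infty}N(T,\Delta)/\Delta$; $F(T)=J(T)+\sum_i(K_i/T_i+H_iT_i)$. The convex relaxation (P) is: minimize $K_0/T_{\min}+\sum_{i\in[n]}(K_i/T_i+H_iT_i)$ over $(T_{\min},T_1,\dots,T_n)$ subject to $T_i\ge T_{\min}\ge0$ for all $i$ and $\sum_i\alpha_{id}/T_i\le1$ for all $d$. $\mathrm{OPT}(P)$ is its optimal value and $T^*=(T^*_{\min},T^*_1,\dots,T^*_n)$ is a fixed optimal solution (with $T^*_{\min}>0$). For integers $m\ge2$, $k\ge1$: $\mathcal{G}_{m,k}=\{m^{p/k}T^*_{\min}:p\in\mathbb{Z}\}$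 and $\mathcal{R}_{m,k}(t)=\min\{g\in\mathcal{G}_{m,k}:g>t\}$ for $t>0$. *)

(* Defs.v *)
From HB Require Import structures.
From mathcomp Require Import all_boot all_order all_algebra.
From mathcomp Require Import all_classical all_reals all_analysis.
Set Implicit Arguments. Unset Strict Implicit. Unset Printing Implicit Defensive.
Import Order.TTheory GRing.Theory Num.Theory.
Local Open Scope classical_set_scope.
Local Open Scope ring_scope.

Section Defs.
Variable R : realType.

Definition multiples (g Delta : R) : seq R :=
  [seq j%:R * g | j <- iota 0 (Num.truncn (Delta / g)).+1].

Definition Ncount (n : nat) (T : 'I_n -> R) (Delta : R) : nat :=
  size (undup (flatten [seq multiples (T i) Delta | i <- enum 'I_n])).

Definition limsup_pinfty (g : R -> R) : \bar R :=
  ereal_inf [set ereal_sup [set (g x)%:E | x in [set x | M <= x]] | M in [set: R]].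

Definition Jcost (n : nat) (K0 : R) (T : 'I_n -> R) : \bar R :=
  let ratio := fun Delta : R => ((Ncount T Delta)%:R / Delta)%R in
  (K0%:E * limsup_pinfty ratio)%E.

Definition Fcost (n : nat) (K0 : R) (K H : 'I_n -> R) (T : 'I_n -> R) : \bar R :=
  let S : R := \sum_(i < n) (K i / T i + H i * T i) in
  (Jcost K0 T + S%:E)%E.

Definition resource_feasible (n D : nat) (alpha : 'I_n -> 'I_D -> R)
  (T : 'I_n -> R) : Prop :=
  (forall i, 0 < T i) /\ (forall d : 'I_D, \sum_(i < n) alpha i d / T i <= 1).

Definition Pobj (n : nat) (K0 : R) (K H : 'I_n -> R) (Tmin : R) (T : 'I_n -> R) : R :=
  K0 / Tmin + \sum_(i < n) (K i / T i + H i * T i).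

(* feasibility for (P); Tmin = 0 makes K0/Tmin = +oo, so such points
   never beat a point with Tmin > 0 and are excluded here *)
Definition Pfeasible (n D : nat) (alpha : 'I_n -> 'I_D -> R) (Tmin : R)
  (T : 'I_n -> R) : Prop :=
  0 < Tmin /\ (forall i, Tmin <= T i) /\
  (forall d : 'I_D, \sum_(i < n) alpha i d / T i <= 1).

Definition grid (m k : nat) (Tmin : R) : set R :=
  [set (m%:R `^ ((p%:~R) / k%:R)) * Tmin | p in [set: int]].

(* R_{m,k}(t) = min { g in G_{m,k} : g > t } (the min exists; written as inf) *)
Definition round_up (m k : nat) (Tmin t : R) : R :=
  fine (ereal_inf [set g%:E | g in grid m k Tmin `&` [set g | t < g]]).

End Defs.

(* Main.v *)
Require Import Defs.
From HB Require Import structures.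
From mathcomp Require Import all_boot all_order all_algebra.
From mathcomp Require Import all_classical all_reals all_analysis.
From mathcomp Require Import ring lra.
Import Order.TTheory GRing.Theory Num.Theory.
Local Open Scope classical_set_scope.
Local Open Scope ring_scope.

Section S.
Variable R : realType.

Lemma round_upP (k : nat) (Tm t : R) : (0 < k)%N -> 0 < Tm -> Tm <= t ->
  exists e : nat, round_up 2 k Tm t = (expR (ln 2 / k%:R)) ^+ e.+1 * Tm /\
     t <= round_up 2 k Tm t <= expR (ln 2 / k%:R) * t.
Proof.
move=> k0 Tm0 Tmt.
have l2 : 0 < ln (2:R) by apply: ln_gt0; lra.
have kR : 0 < k%:R :> R by rewrite ltr0n.
set L := ln 2 / k%:R.
have L0 : 0 < L by rewrite /L divr_gt0.
have t0 : 0 < t by lra.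
have ht : 1 <= t / Tm by rewrite ler_pdivlMr // mul1r.
set u := k%:R * ln (t / Tm) / ln 2.
have u0 : 0 <= u by rewrite /u divr_ge0 ?mulr_ge0 ?(ltW l2) ?(ltW kR) // ln_ge0.
have uL : u * L = ln (t / Tm).
  rewrite /u /L; field; apply/andP; split; rewrite gt_eqF //.
have tE : t = expR (u * L) * Tm by rewrite uL lnK ?divfK ?gt_eqF // posrE divr_gt0.
set e := Num.truncn u.
have /andP [eu ue] := truncn_itv u0.
set g0 := expR (e.+1%:R * L) * Tm.
have pw : forall p : R, 2 `^ p = expR (p * k%:R * L).
  move=> p; rewrite /powR ifF; last by apply/negbTE; rewrite pnatr_eq0.
  congr expR; rewrite /L; field; rewrite gt_eqF //.
have inf : ereal_inf [set g%:E | g in grid 2 k Tm `&` [set g | t < g]] = g0%:E.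
  apply/le_anti/andP; split.
    apply: ge_ereal_inf; exists g0%:E => //; exists g0 => //; split.
      exists (Posz e.+1) => //; rewrite pw /g0; congr (expR _ * _).
      by rewrite divfK ?gt_eqF.
    rewrite /= /g0 {1}tE ltr_pM2r // ltr_expR ltr_pM2r //.
  apply/ereal_infP => y [g [[p _ <-] tg] <-]; rewrite lee_fin /g0.
  move: tg; rewrite /= pw divfK ?gt_eqF // tE ltr_pM2r // ltr_expR ltr_pM2r // => up.
  rewrite ler_pM2r // ler_expR ler_pM2r //.
  have : (e%:Z)%:~R < p%:~R :> R by apply: le_lt_trans up.
  rewrite ltr_int -lezD1 -(ler_int R) => h; apply: le_trans h.
  by rewrite intrD -natr1.

rewrite /round_up inf /=; exists e; split.
  by rewrite /g0 expRM_natl.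
apply/andP; split.
  by rewrite /g0 {1}tE ler_pM2r // ler_expR ler_pM2r // ltW.
rewrite /g0 {1}tE mulrA -expRD ler_pM2r // ler_expR.
by rewrite -natr1 mulrDl mul1r addrC lerD2l ler_pM2r.
Qed.
Lemma count_bound (n k : nat) (r Tm : R) (T : 'I_n -> R) (e : 'I_n -> nat) (Dl : R) :
  (0 < k)%N -> 1 <= r -> r ^+ k = 2 -> 0 < Tm -> 0 < Dl ->
  (forall i, T i = r ^+ (e i).+1 * Tm) ->
  (Ncount T Dl)%:R <= \sum_(s <- iota 0 k) (Dl / (r ^+ s.+1 * Tm) + 1).
Proof.
move=> k0 r1 rk Tm0 D0 hT.
have g0 : forall s, 0 < r ^+ s.+1 * Tm.
  by move=> s; rewrite mulr_gt0 // exprn_gt0 //; lra.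
set L' := flatten [seq multiples (r ^+ s.+1 * Tm) Dl | s <- iota 0 k].
have sz : (size L')%:R = \sum_(s <- iota 0 k) ((Num.truncn (Dl / (r ^+ s.+1 * Tm))).+1%:R : R).
  rewrite /L' size_flatten sumnE /shape -map_comp big_map natr_sum.
  by apply: eq_bigr => s _; rewrite /= /multiples size_map size_iota.
apply: (le_trans (y := (size L')%:R)).
  rewrite ler_nat /Ncount; apply: uniq_leq_size; first exact: undup_uniq.
  move=> x; rewrite mem_undup => /flattenP [l /mapP [i _ ->] /mapP [j]].
  rewrite mem_iota add0n ltnS => jle ->.
  set q := (e i %/ k)%N; set s := (e i %% k)%N.
  have Ti : T i = (2 ^+ q) * (r ^+ s.+1 * Tm).
    rewrite hT {1}(divn_eq (e i) k) -addnS exprD mulnC exprM rk -/q -/s mulrA //.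
  apply/flattenP; exists (multiples (r ^+ s.+1 * Tm) Dl).
    by apply/map_f; rewrite mem_iota add0n /s ltn_pmod.
  apply/mapP; exists (j * 2 ^ q)%N.
    have Ti0 : 0 < T i by rewrite Ti mulr_gt0 ?exprn_gt0 ?g0.
    have hj : (j * 2 ^ q <= Num.truncn (Dl / (r ^+ s.+1 * Tm)))%N.
      rewrite truncn_ge_nat; last by rewrite divr_ge0 // ltW.
      rewrite natrM natrX ler_pdivlMr //.
      have h1 : (Num.truncn (Dl / T i))%:R <= Dl / T i by rewrite truncn_le divr_ge0 ?ltW.
      have : j%:R <= Dl / T i by apply: le_trans h1; rewrite ler_nat.
      by rewrite (ler_pdivlMr _ _ Ti0) Ti !mulrA.
    by rewrite mem_iota add0n ltnS hj.
  by rewrite Ti natrM natrX mulrA.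
rewrite sz ler_sum // => s _; rewrite -natr1 lerD2r.
by rewrite truncn_le divr_ge0 ?ltW.
Qed.

Lemma J_bound (n k : nat) (r Tm K0 : R) (T : 'I_n -> R) (e : 'I_n -> nat) :
  (0 < k)%N -> 1 <= r -> r ^+ k = 2 -> 0 < Tm -> 0 <= K0 ->
  (forall i, T i = r ^+ (e i).+1 * Tm) ->
  (Jcost K0 T <= (K0 * \sum_(s <- iota 0 k) (r ^+ s.+1 * Tm)^-1)%:E)%E.
Proof.
move=> k0 r1 rk Tm0 K00 hT.
set c := \sum_(s <- iota 0 k) (r ^+ s.+1 * Tm)^-1.
have rat : forall x, 0 < x -> (Ncount T x)%:R / x <= c + k%:R / x.
  move=> x x0; rewrite ler_pdivrMr // mulrDl divfK ?gt_eqF //.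
  apply: le_trans (@count_bound n k r Tm T e x k0 r1 rk Tm0 x0 hT) _.
  rewrite big_split /= mulr_suml.
  have s1 : \sum_(i <- iota 0 k) (1:R) = k%:R by rewrite -[in RHS](size_iota 0 k) -sum1_size natr_sum.
  rewrite s1 lerD2r.
  by apply: ler_sum => s _; rewrite mulrC.
rewrite /Jcost /= EFinM; apply: lee_wpmul2l; first by rewrite lee_fin.
apply/lee_addgt0Pr => eps eps0.
set M := k%:R / eps + 1.
have M0 : 0 < M by rewrite /M ltr_wpDl // divr_ge0 // ltW.
apply: ge_ereal_inf.
exists (ereal_sup [set ((Ncount T x)%:R / x)%:E | x in [set x | M <= x]]).
  by exists M.
apply/ereal_supP => y [x /= Mx <-]; rewrite -EFinD lee_fin.
have x0 : 0 < x by apply: lt_le_trans Mx.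
apply: le_trans (rat x x0) _; rewrite lerD2l.
rewrite ler_pdivrMr //; apply: le_trans (ler_wpM2l (ltW eps0) Mx).
by rewrite /M mulrDr mulr1 mulrC divfK ?gt_eqF // lerDl ltW.
Qed.

Lemma item_bound (r Kc Hc t T : R) : 1 <= r -> 0 < Kc -> 0 < Hc -> 0 < t ->
  t <= T <= r * t -> Kc / T + Hc * T <= r * (Kc / t + Hc * t).
Proof.
move=> r1 K0 H0 t0 /andP [tT Tr].
have T0 : 0 < T by apply: lt_le_trans tT.
have h1 : Kc / T <= Kc / t.
  by rewrite ler_wpM2l ?(ltW K0) // lef_pV2 ?posrE.
have h2 : Kc / t <= r * (Kc / t).
  by rewrite ler_peMl // divr_ge0 // ltW.
have h3 : Hc * T <= r * (Hc * t) by rewrite mulrCA ler_wpM2l // ltW.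
rewrite mulrDr; lra.
Qed.

Lemma policy_bound (n D k : nat) (K0 : R) (K H : 'I_n -> R)
  (alpha : 'I_n -> 'I_D -> R) (Tm : R) (Ts : 'I_n -> R) :
  (0 < k)%N -> 0 < K0 ->
  (forall i, 0 < K i) -> (forall i, 0 < H i) ->
  (forall i d, 0 <= alpha i d) ->
  Pfeasible alpha Tm Ts ->
  let r := expR (ln 2 / k%:R) in
  let T := fun i => round_up 2 k Tm (Ts i) in
  resource_feasible alpha T /\
  (Fcost K0 K H T <= (K0 / Tm * \sum_(s <- iota 0 k) (r ^+ s.+1)^-1
                      + r * \sum_(i < n) (K i / Ts i + H i * Ts i))%:E)%E.
Proof.
move=> k0 K00 Kp Hp ap [Tm0 [hTs hres]] r T.
have rk : r ^+ k = 2.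
  rewrite /r -expRM_natl mulrC divfK ?lnK ?posrE // pnatr_eq0 -lt0n //.
have r1 : 1 <= r.
  have l2 : 0 < ln (2:R) by apply: ln_gt0; lra.
  by rewrite /r -[X in X <= _]expR0 ler_expR divr_ge0 // ltW.
have hr : forall i, exists e : nat, T i = r ^+ e.+1 * Tm /\ Ts i <= T i <= r * Ts i.
  by move=> i; apply: round_upP.
have [e he] := choice hr.
have Ts0 : forall i, 0 < Ts i by move=> i; apply: lt_le_trans (hTs i).
have T0 : forall i, 0 < T i.
  move=> i; have /andP [h _] := (he i).2; apply: lt_le_trans h; exact: Ts0.
split.
  split => // d; apply: le_trans (hres d); apply: ler_sum => i _.
  have /andP [h _] := (he i).2.
  by rewrite ler_wpM2l // lef_pV2 ?posrE.
rewrite /Fcost /= EFinD; apply: leeD.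
  apply: le_trans (@J_bound n k r Tm K0 T e k0 r1 rk Tm0 (ltW K00) (fun i => (he i).1)) _.
  rewrite lee_fin -mulrA; apply: ler_wpM2l; first exact: ltW.
  rewrite mulr_sumr; apply: ler_sum => s _.
  by rewrite invfM mulrC.
rewrite lee_fin mulr_sumr; apply: ler_sum => i _.
by apply: item_bound => //; exact: (he i).2.
Qed.

Lemma rk_fact (k : nat) : (0 < k)%N -> expR (ln (2:R) / k%:R) ^+ k = 2.
Proof.
move=> k0; rewrite -expRM_natl mulrC divfK ?lnK ?posrE // pnatr_eq0 -lt0n //.
Qed.

Lemma sqrt2_bounds (r : R) : 0 < r -> r ^+ 2 = 2 ->
  141421%:R / 100000%:R <= r <= 141422%:R / 100000%:R.
Proof. move=> r0 h; rewrite expr2 in h; apply/andP; split; nra. Qed.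

Lemma cbrt2_bounds (r : R) : 0 < r -> r ^+ 3 = 2 ->
  125992%:R / 100000%:R <= r <= 125993%:R / 100000%:R.
Proof.
move=> r0 h; have h' : r * r * r = 2 by rewrite -h !exprS expr0 mulr1 mulrA.
apply/andP; split; nra.
Qed.
End S.

Theorem lemma2p4 (R : realType) (n D : nat) (K0 : R) (K H : 'I_n -> R)
  (alpha : 'I_n -> 'I_D -> R) (Tsmin : R) (Ts : 'I_n -> R) :
  (1 <= n)%N -> (1 <= D)%N -> 0 < K0 ->
  (forall i, 0 < K i) -> (forall i, 0 < H i) ->
  (forall i d, 0 <= alpha i d) ->
  Pfeasible alpha Tsmin Ts ->
  (forall (Tmin : R) (T : 'I_n -> R), Pfeasible alpha Tmin T ->
     Pobj K0 K H Tsmin Ts <= Pobj K0 K H Tmin T) ->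
  let T22 := fun i => round_up 2 2 Tsmin (Ts i) in
  let T23 := fun i => round_up 2 3 Tsmin (Ts i) in
  [/\ resource_feasible alpha T22, resource_feasible alpha T23 &
      (Order.min (Fcost K0 K H T22) (Fcost K0 K H T23)
        <= ((13776%:R / 10000%:R) * Pobj K0 K H Tsmin Ts)%:E)%E].
Proof.
move=> n1 D1 K00 Kp Hp ap hf _ T22 T23.
have [f2 b2] := @policy_bound R n D 2 K0 K H alpha Tsmin Ts erefl K00 Kp Hp ap hf.
have [f3 b3] := @policy_bound R n D 3 K0 K H alpha Tsmin Ts erefl K00 Kp Hp ap hf.
split => //.
rewrite !big_cons !big_nil /= in b2 b3.
set r2 := expR (ln 2 / 2%:R) in b2.
set r3 := expR (ln 2 / 3%:R) in b3.
set S := \sum_(i < n) _ in b2 b3.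
set a := K0 / Tsmin in b2 b3.
have [Tm0 [hTs _]] := hf.
have a0 : 0 <= a by rewrite /a divr_ge0 // ltW.
have S0 : 0 <= S.
  apply: sumr_ge0 => i _; have Ts0 : 0 < Ts i by apply: lt_le_trans (hTs i).
  by rewrite addr_ge0 // ?divr_ge0 ?mulr_ge0 // ltW.
have r20 : 0 < r2 by apply: expR_gt0.
have r30 : 0 < r3 by apply: expR_gt0.
have r2s : r2 ^+ 2 = 2 by apply: rk_fact.
have r3s : r3 ^+ 3 = 2 by apply: rk_fact.
case/andP: (@sqrt2_bounds R r2 r20 r2s) => r2l r2u.
case/andP: (@cbrt2_bounds R r3 r30 r3s) => r3l r3u.
have i2 : r2^-1 <= 707109%:R / 1000000%:R.
  by rewrite -[r2^-1]mul1r ler_pdivrMr //; lra.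
have i22 : r2^-2 = 1 / 2 by rewrite r2s mul1r.
have i3 : r3^-1 <= 793702%:R / 1000000%:R.
  by rewrite -[r3^-1]mul1r ler_pdivrMr //; lra.
have i32 : r3^-2 <= 629963%:R / 1000000%:R.
  rewrite -[r3^-2]mul1r ler_pdivrMr ?exprn_gt0 // expr2; nra.
have i33 : r3^-3 = 1 / 2 by rewrite r3s mul1r.
have h1 : a * (r2 ^- 1 + (r2 ^- 2 + 0)) <= a * (707109%:R / 1000000%:R + 1 / 2).
  by apply: ler_wpM2l => //; rewrite i22; lra.
have h2 : a * (r3 ^- 1 + (r3 ^- 2 + (r3 ^- 3 + 0))) <=
    a * (793702%:R / 1000000%:R + 629963%:R / 1000000%:R + 1 / 2).
  by apply: ler_wpM2l => //; rewrite i33; lra.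
have h3 : r2 * S <= 141422%:R / 100000%:R * S by exact: (ler_wpM2r S0 r2u).
have h4 : r3 * S <= 125993%:R / 100000%:R * S by exact: (ler_wpM2r S0 r3u).
move: b2 b3 h1 h2 h3 h4.
set X2 := a * (_ + _). set X3 := a * (_ + _). set Y2 := r2 * S. set Y3 := r3 * S.
move=> b2 b3 h1 h2 h3 h4.
have PE : Pobj K0 K H Tsmin Ts = a + S by [].
rewrite PE ge_min.
have [hA|hA] := leP (X2 + Y2) (13776%:R / 10000%:R * (a + S)).
  by apply/orP; left; apply: le_trans b2 _; rewrite lee_fin.
apply/orP; right; apply: le_trans b3 _; rewrite lee_fin.
lra.
Qed.
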